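(* Let $a$ be a positive integer and let $k(a)$ be the least positive integer such that every Abelian group of order $k(a)$ is isomorphic to some product $\mathcal{G}_1\times\cdots\times\mathcal{G}_a$ of Abelian groups with $|\mathcal{G}_i|\geq 4$ for $i=1,\ldots,a$. If $G$ is a finite simple graph of arboricity at most $a$ containing no isolated edges, then ${\chi^\Sigma_g}^\star(G)\leq k(a)$.
   Context: The arboricity of $G$ is the least number of forests into which $E(G)$ can be decomposed; an isolated edge is a connected component isomorphic to $K_2$. For an Abelian group $\mathcal{G}$ with identity $0$ and $f\colon E(G)\to\mathcal{G}$, $w_f(v)=\sum_{u\in N(v)}f(uv)$. ${\chi^\Sigma_g}^\star(G)$ is the least positive integer $k$ such that for every Abelian group $\mathcal{G}$ of order $k$ there exists $f\colon E(G)\to\mathcal{G}\setminus\{0\}$ with $w_f(u)\neq w_f(v)$ for every edge $uv$. *)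

(* Defs.v *)
From HB Require Import structures.
From mathcomp Require Import all_boot all_order all_algebra.
Set Implicit Arguments. Unset Strict Implicit. Unset Printing Implicit Defensive.
Import GRing.Theory.
Local Open Scope ring_scope.

Definition simple_graph (T : finType) (e : rel T) : Prop :=
  symmetric e /\ irreflexive e.

Definition forest (T : finType) (F : rel T) : Prop :=
  forall p : seq T, uniq p -> (3 <= size p)%N -> ~~ cycle F p.

(* Arboricity at most a: E(G) decomposes into a forests, given by a colouring
   of the edges with a colours (symmetric on edges) whose colour classes are
   forests. *)
Definition arboricity_le (T : finType) (e : rel T) (a : nat) : Prop :=
  exists col : T -> T -> 'I_a,
    (forall x y, e x y -> col x y = col y x) /\
    forall i : 'I_a, forest [rel x y | e x y && (col x y == i)].

(* An isolated edge: a connected component isomorphic to K2, i.e. an edge uv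
   such that u and v have no neighbours other than each other. *)
Definition isolated_edge (T : finType) (e : rel T) (u v : T) : Prop :=
  e u v /\ (forall w, e u w -> w = v) /\ (forall w, e v w -> w = u).

Definition no_isolated_edges (T : finType) (e : rel T) : Prop :=
  forall u v, ~ isolated_edge e u v.

Definition wdeg (T : finType) (e : rel T) (A : zmodType) (f : T -> T -> A)
  (v : T) : A := \sum_(u | e v u) f v u.

Definition group_sum_good (T : finType) (e : rel T) (k : nat) : Prop :=
  forall A : finZmodType, #|A| = k ->
    exists f : T -> T -> A,
      (forall x y, e x y -> f x y = f y x) /\
      (forall x y, e x y -> f x y != 0) /\
      (forall u v, e u v -> wdeg e f u != wdeg e f v).

Definition is_chi_sigma_star (T : finType) (e : rel T) (c : nat) : Prop :=
  (0 < c)%N /\ group_sum_good e c /\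
  forall j, (0 < j)%N -> group_sum_good e j -> (c <= j)%N.

(* Product of a family of abelian groups indexed by 'I_a, as the dependent
   function type with pointwise addition; an isomorphism from A to the
   product is an additive bijection. *)
Definition iso_to_prod (A : zmodType) (a : nat) (B : 'I_a -> zmodType)
  (phi : A -> forall i, B i) : Prop :=
  bijective phi /\ forall x y, phi (x + y) = (fun i => phi x i + phi y i).

Definition splits_into (a k : nat) : Prop :=
  forall A : finZmodType, #|A| = k ->
    exists B : 'I_a -> finZmodType,
      (forall i, (4 <= #|B i|)%N) /\
      exists phi : A -> forall i, B i, iso_to_prod phi.

Definition is_k_of (a c : nat) : Prop :=
  (0 < c)%N /\ splits_into a c /\
  forall j, (0 < j)%N -> splits_into a j -> (c <= j)%N.

(* Main.v *)
From HB Require Import structures.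
Require Import Defs.
From mathcomp Require Import all_boot all_order all_algebra.
From Stdlib Require Import Classical.
From mathcomp Require Import zify.
Set Implicit Arguments. Unset Strict Implicit. Unset Printing Implicit Defensive.
Import GRing.Theory.
Lemma exists_max (P : nat -> Prop) b : (exists n, P n) ->
  (forall n, P n -> (n <= b)%N) -> exists n, P n /\ forall m, P m -> (m <= n)%N.
Proof.
move=> [n Pn] Hb.
have: forall d n, (b - n <= d)%N -> P n -> exists n, P n /\ forall m, P m -> (m <= n)%N.
  elim=> [|d IH] k Hk Pk.
    exists k; split=> // m Pm; have := Hb _ Pm; have := Hb _ Pk; lia.
  case: (classic (exists m, P m /\ (k < m)%N)) => [[m [Pm km]]|Hn].
    apply: (IH m) => //; lia.
  exists k; split=> // m Pm; case: (leqP m k) => // km; exfalso; apply: Hn; by exists m.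
by move=> /(_ (b - n) n (leqnn _) Pn).
Qed.

Section Paths.
Variable T : finType.
Variable F : rel T.
Hypothesis Fsym : symmetric F.
Hypothesis Firr : irreflexive F.
Hypothesis Ffor : forest F.

Definition good x s := uniq (x :: s) && path F x s.

Lemma cyc_contra x y t w : good x (y :: t) -> w \in t -> F w x -> False.
Proof.
move=> /andP[Hu Hp] wt Fwx.
case/splitPr: wt Hu Hp => t1 t2 Hu Hp.
have E : x :: y :: t1 ++ w :: t2 = (x :: y :: rcons t1 w) ++ t2 by rewrite -cat_rcons.
move: Hu Hp; rewrite E cat_uniq => /andP[Hu _].
rewrite -cat_rcons -cat_cons cat_path => /andP[Hp _].
have := Ffor Hu; rewrite /= size_rcons => /(_ isT) /negP; apply.
by rewrite /cycle /= rcons_path last_rcons Fwx andbT.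
Qed.

Lemma good_size x s : good x s -> (size s <= #|T|)%N.
Proof.
move=> /andP[Hu _]; have := card_uniqP Hu; have := max_card (mem (x :: s)).
by move=> H1 H2; move: H1; rewrite H2 /=; lia.
Qed.

Definition maxgood x s := good x s /\ forall x' s', good x' s' -> (size s' <= size s)%N.

Lemma maxgood_exists x s : good x s -> exists x' s', maxgood x' s' /\ (size s <= size s')%N.
Proof.
move=> G.
have Hb : forall n, (exists x' s', good x' s' /\ size s' = n /\ (size s <= n)%N) -> (n <= #|T|)%N.
  by move=> n [x' [s' [G' [<- _]]]]; exact: good_size G'.
have [n [[x' [s' [G' [E L]]]] Hm]] := @exists_max
  (fun n => exists x' s', good x' s' /\ size s' = n /\ (size s <= n)%N) #|T|
  (ex_intro _ (size s) (ex_intro _ x (ex_intro _ s (conj G (conj erefl (leqnn _)))))) Hb.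
exists x', s'; split; last by rewrite E.
split=> // x'' s'' G''.
rewrite E; case: (leqP (size s'') n) => // Hlt.
have := Hm (size s'') (ex_intro _ x'' (ex_intro _ s'' (conj G'' (conj erefl _)))).
move=> H; have : (size s <= size s'')%N by lia.
by move=> /H; lia.
Qed.

Lemma epl x y t w : maxgood x (y :: t) -> F x w -> w = y.
Proof.
move=> [G M] Fxw.
have [/orP [/eqP wx|wyt]| wn] := boolP (w \in x :: y :: t).
- by move: Fxw; rewrite wx Firr.
- case/predU1P: wyt => [//|wt].
  exfalso; apply: (cyc_contra G wt); by rewrite Fsym.
- have G' : good w (x :: y :: t).
    move: G => /andP [Hu Hp]; apply/andP; split; first by rewrite /= wn.
    by rewrite /= Fsym Fxw.
  by have := M _ _ G'; rewrite /=; lia.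
Qed.

Lemma structure : (exists a b c, F a b /\ F b c /\ a != c) ->
  exists p q l0, [/\ F p q, F p l0, l0 != q &
     forall w, F p w -> w != q -> forall z, F w z -> z = p].
Proof.
move=> [a [b [c [Fab [Fbc ac]]]]].
have Gabc : good a [:: b; c].
  apply/andP; split; last by rewrite /= Fab Fbc.
  have ab : a != b by apply/negP => /eqP E; move: Fab; rewrite E Firr.
  have bc : b != c by apply/negP => /eqP E; move: Fbc; rewrite E Firr.
  by rewrite /= !inE negb_or ab ac bc.
have [x [s [MG Hs]]] := maxgood_exists Gabc.
case: s MG Hs => [|y [|z t]] MG Hs //.
exists y, z, x.
have [G M] := MG.
have G2 := G; move: G2 => /andP [Hu Hp].
move: (Hp) => /= /and3P [Fxy Fyz Hpt].
split.
- exact: Fyz.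
- by rewrite Fsym.
- by move: Hu; rewrite /= !inE !negb_or => /and4P [/and3P [_ -> _] _ _ _].
- move=> w Fyw wz z' Fwz'.
  have [wx|wx] := eqVneq w x.
    by rewrite wx in Fwz'; apply: (epl MG).
  have Gy : good y (z :: t).
    apply/andP; split; first by move: Hu => /andP [_ HH]; exact: HH.
    by rewrite /= Fyz.
  have wt : w \notin t.
    apply/negP => wt; apply: (cyc_contra Gy wt); by rewrite Fsym.
  have Gw : good w (y :: z :: t).
    apply/andP; split; last by rewrite /= Fsym Fyw Fyz.
    have wy : w != y by apply/negP => /eqP E; move: Fyw; rewrite E Firr.
    rewrite cons_uniq; apply/andP; split; last by move: Hu => /andP [_ HH]; exact: HH.
    by rewrite !inE !negb_or wy wz wt.
  have MGw : maxgood w (y :: z :: t) by split=> // x' s' /M.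
  exact: (epl MGw).
Qed.

End Paths.
Lemma arith1 n : (3 < n)%N -> (n < n - 1 + (n - 2))%N. Proof. lia. Qed.

Section Star.
Local Open Scope ring_scope.
Variable Gm : finZmodType.
Variable T : finType.

Lemma exists_avoid3 (c1 c2 c3 : Gm) : (3 < #|Gm|)%N ->
  exists v : Gm, [&& v != c1, v != c2 & v != c3].
Proof.
move=> H; apply: NNPP => Hn.
have : (#|Gm| <= 3)%N.
  have := card_size [:: c1; c2; c3]; apply: leq_trans.
  apply: subset_leq_card; apply/subsetP => v _.
  apply: NNPP => Hv; apply: Hn; exists v.
  by move: Hv; rewrite !inE; case: (v == c1); case: (v == c2); case: (v == c3).
by rewrite leqNgt H.
Qed.

Lemma neq_add (a v s : Gm) : (a + v != s) = (v != s - a).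
Proof. by rewrite (eq_sym v) subr_eq addrC eq_sym. Qed.

Lemma card_avoid2 (c1 c2 : Gm) : (#|Gm| - 2 <= #|[set v : Gm | (v != c1) && (v != c2)]|)%N.
Proof.
have H := cardsUI [set v : Gm | (v != c1) && (v != c2)] [set c1; c2].
have H0 : [set v : Gm | (v != c1) && (v != c2)] :|: [set c1; c2] = setT.
  apply/setP => v; rewrite !inE.
  by case: (v == c1); case: (v == c2).
have H1 : #|[set v : Gm | (v != c1) && (v != c2)] :|: [set c1; c2]| = #|Gm|.
  by rewrite H0 cardsT.
have H2 := cards2 c1 c2.
have : (#|[set c1; c2]| <= 2)%N by rewrite H2; case: (c1 != c2).
move: H; rewrite H1; lia.
Qed.

Lemma card_avoid1 (c : Gm) : (#|Gm| - 1 <= #|[set v : Gm | (v != c) && (v != c)]|)%N.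
Proof.
have -> : [set v : Gm | (v != c) && (v != c)] = [set~ c].
  by apply/setP => v; rewrite !inE andbb.
by rewrite cardsC1 subn1.
Qed.

Lemma inter_exists (A B : {set Gm}) : (#|Gm| < #|A| + #|B|)%N -> exists v, v \in A /\ v \in B.
Proof.
move=> H; have H2 := cardsUI A B.
have H1 : (#|A :|: B| <= #|Gm|)%N by apply: max_card.
have : (0 < #|A :&: B|)%N by lia.
rewrite card_gt0 => /set0Pn [v]; rewrite inE => /andP [? ?]; by exists v.
Qed.

Lemma sumL (L : {set T}) (l1 l2 : T) (al : T -> Gm -> bool) (t : Gm) :
  l1 \in L -> l2 \in L -> l1 != l2 -> (forall w, w \in L -> exists v, al w v) ->
  (#|Gm| < #|[set v | al l1 v]| + #|[set v | al l2 v]|)%N ->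
  exists x : T -> Gm, (forall w, w \in L -> al w (x w)) /\ \sum_(w in L) x w = t.
Proof.
move=> l1L l2L l12 Hne Hc.
pose x0 w := odflt 0 [pick v | al w v].
have Hx0 : forall w, w \in L -> al w (x0 w).
  move=> w wL; rewrite /x0; case: pickP => [v //|H].
  by have [v Hv] := Hne w wL; move: (H v); rewrite Hv.
pose R := \sum_(w in L | (w != l1) && (w != l2)) x0 w.
have Hc' : (#|Gm| < #|[set v | al l1 v]| + #|[set (t - R - v)%R | v in [set v | al l2 v]]|)%N.
  rewrite card_imset //; move=> u v /= E.
  by move: E => /addrI /oppr_inj.
have [v1 [H1 H2]] := inter_exists Hc'.
move: H1; rewrite inE => H1.
move: H2 => /imsetP [v2]; rewrite inE => H2 E.
exists (fun w => if w == l1 then v1 else if w == l2 then v2 else x0 w); split.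
  move=> w wL; case: eqP => [->//|_]; case: eqP => [->//|_]; exact: Hx0.
rewrite (bigD1 l1) //= eqxx (bigD1 l2) /=; last by rewrite l2L eq_sym l12.
rewrite eqxx eq_sym (negbTE l12).
rewrite (eq_bigr x0); last first.
  by move=> w /andP [/andP [_ /negbTE ->] /negbTE ->].
rewrite (eq_bigl (fun w => (w \in L) && ((w != l1) && (w != l2)))); last first.
  by move=> w; case: (w \in L); case: (w != l1); case: (w != l2).
rewrite -/R E addrA; rewrite -[t - R - v2 + v2]addrA [- v2 + v2]addrC subrr addr0.
by rewrite -addrA [- R + R]addrC subrr addr0.
Qed.

Definition ach (L : {set T}) (a : T -> Gm) (B s : Gm) :=
  exists x : T -> Gm, (forall w, w \in L -> x w != 0 /\ a w + x w != s) /\ s = B + \sum_(w in L) x w.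

Lemma achA (L : {set T}) a B l1 l2 : (3 < #|Gm|)%N ->
  l1 \in L -> l2 \in L -> l1 != l2 -> ach L a B (a l1).
Proof.
move=> Hn l1L l2L l12.
have S1 : forall w, w \in L -> exists v, (fun w v => (v != 0) && (v != a l1 - a w)) w v.
  move=> w wL; have := card_avoid2 0 (a l1 - a w).
  move=> H; have : (0 < #|[set v : Gm | (v != 0%R) && (v != (a l1 - a w)%R)]|)%N by lia.
  by rewrite card_gt0 => /set0Pn [v]; rewrite inE => Hv; exists v.
have S2 : (#|Gm| < #|[set v | (fun w v => (v != 0%R) && (v != (a l1 - a w)%R)) l1 v]| +
     #|[set v | (fun w v => (v != 0%R) && (v != (a l1 - a w)%R)) l2 v]|)%N.
  rewrite /= subrr.
  apply: (leq_trans _ (leq_add (card_avoid1 0) (card_avoid2 0 (a l1 - a l2)))).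
  exact: arith1.
have [x [Hx Hs]] := sumL (a l1 - B) l1L l2L l12 S1 S2.
exists x; split.
  by move=> w wL; have /andP [-> H] := Hx w wL; rewrite neq_add H.
by rewrite Hs addrC -addrA [- B + B]addrC subrr addr0.
Qed.

End Star.
Section Star2.
Local Open Scope ring_scope.
Variable Gm : finZmodType.
Variable T : finType.

Lemma ach2 (L : {set T}) (a : T -> Gm) B w0 : (3 < #|Gm|)%N -> w0 \in L -> B != a w0 ->
  exists s1 s2, s1 != s2 /\ ach L a B s1 /\ ach L a B s2.
Proof.
move=> Hn w0L BN.
case: (boolP [exists w1, (w1 \in L) && (a w1 != a w0)]) => [/existsP [w1 /andP [w1L aw]] | Hall].
  have w01 : w0 != w1 by apply: contraNneq aw => ->.
  exists (a w0), (a w1); split; first by rewrite eq_sym.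
  split; first exact: achA Hn w0L w1L w01.
  by apply: achA Hn w1L w0L _; rewrite eq_sym.
have Hall' : forall w, w \in L -> a w = a w0.
  move=> w wL; apply/eqP; apply: contraNT Hall => H; apply/existsP; exists w; by rewrite wL.
case: (boolP [exists w1, (w1 \in L) && (w1 != w0)]) => [/existsP [w1 /andP [w1L w10]] | Hone].
  pose k := #|[pred w | (w \in L) && (w != w0)]|.
  have [t [t0 tk]] : exists t, t != 0 /\ B + t *+ k != a w0.
    apply: NNPP => Hc.
    have Hc' : forall t, t != 0 -> B + t *+ k = a w0.
      move=> t t0; apply: NNPP => H; apply: Hc; exists t; split => //; exact/eqP.
    have [t1 /and3P [t10 _ _]] := exists_avoid3 0 0 0 Hn.
    have [t2 /and3P [t20 t21 _]] := exists_avoid3 0 (- t1) 0 Hn.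
    have t12 : t1 + t2 != 0 by rewrite addrC addr_eq0.
    have E1 := Hc' t1 t10.
    have E3 := Hc' _ t12.
    have D1 : t1 *+ k = a w0 - B by rewrite -E1 [B + _]addrC addrK.
    have D2 : t2 *+ k = a w0 - B by rewrite -(Hc' t2 t20) [B + _]addrC addrK.
    move: E3; rewrite mulrnDl D2 addrA -D1 E1 => E3.
    have : a w0 - B = 0.
      by apply: (@addrI _ (a w0)); rewrite addr0 -D1 E3.
    by move/eqP; rewrite subr_eq0 eq_sym (negbTE BN).
  have [u /and3P [u0 u1 u2]] := exists_avoid3 0 (a w0 + t - (B + t *+ k)) (a w0 - (B + t *+ k)) Hn.
  pose x := fun w => if w == w0 then u else t.
  have Hsum : \sum_(w in L) x w = u + t *+ k.
    rewrite (bigD1 w0) //= /x eqxx; congr (_ + _).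
    rewrite (eq_bigr (fun _ => t)); last by move=> w /andP [_ /negbTE ->].
    by rewrite sumr_const.
  exists (a w0), (B + (u + t *+ k)); split.
    apply: contra u2 => /eqP E; apply/eqP.
    by rewrite E addrCA addrK.
  split; first by apply: achA Hn w0L w1L _; rewrite eq_sym.
  exists x; split; last by rewrite Hsum.
  move=> w wL; rewrite /x; case: (eqVneq w w0) => [->|ww0]; split => //.
    apply: contra tk => /eqP E; apply/eqP.
    by move: E; rewrite addrCA [u + _]addrC => /addIr.
  rewrite (Hall' w wL); apply: contra u1 => /eqP E; apply/eqP.
  by rewrite E addrCA addrK.
have HL : forall c : Gm, \sum_(w in L) c = c.
  move=> c; rewrite (big_pred1 w0) // => w /=.
  apply/idP/idP => [wL|/eqP ->//].
  apply: contraNT Hone => H; apply/existsP; exists w; by rewrite wL.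
have [x1 /and3P [x10 _ _]] := exists_avoid3 0 0 0 Hn.
have [x2 /and3P [x20 x21 _]] := exists_avoid3 0 x1 0 Hn.
have Hc : forall c, c != 0 -> ach L a B (B + c).
  move=> c c0; exists (fun _ => c); split; last by rewrite HL.
  move=> w wL; split => //; rewrite (Hall' w wL).
  by apply: contra BN => /eqP /addIr ->.
exists (B + x1), (B + x2); split; last by split; apply: Hc.
by apply: contra x21 => /eqP /addrI ->.
Qed.

End Star2.
Section ForestLab.
Local Open Scope ring_scope.
Variable Gm : finZmodType.
Variable T : finType.

Definition proper_lab (F : rel T) (g : T -> Gm) (f : T -> T -> Gm) :=
  [/\ forall x y, F x y -> f x y = f y x,
      forall x y, F x y -> f x y != 0 &
      forall u v, F u v -> g u + wdeg F f u != g v + wdeg F f v].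

Definition remp (F : rel T) p := [rel x y | F x y && (x != p) && (y != p)].

Lemma iso_sym (F : rel T) u v : symmetric F -> isolated_edge F u v -> isolated_edge F v u.
Proof. by move=> Fs [H1 [H2 H3]]; split; [rewrite Fs|split]. Qed.

Lemma remp_sym F p : symmetric F -> symmetric (remp F p).
Proof. by move=> Fs x y; rewrite /= Fs andbAC. Qed.

Lemma remp_irr F p : irreflexive F -> irreflexive (remp F p).
Proof. by move=> Fi x; rewrite /= Fi. Qed.

Lemma remp_forest F p : forest F -> forest (remp F p).
Proof.
move=> Ff s Hu Hs; apply/negP => Hc; have := Ff s Hu Hs; apply/negP; apply/negPn.
case: s Hu Hs Hc => [//|x s] _ _; rewrite /cycle; apply: sub_path.
by move=> a b /andP [/andP [-> _] _].
Qed.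

Lemma wdeg0 (F : rel T) (f : T -> T -> Gm) v : (forall b, ~~ F v b) -> wdeg F f v = 0.
Proof. by move=> H; rewrite /wdeg big_pred0 // => b; rewrite (negbTE (H b)). Qed.

Lemma assemble (F : rel T) p (h : T -> Gm) (f2 : T -> T -> Gm) :
  symmetric F -> irreflexive F ->
  (forall x y, remp F p x y -> f2 x y = f2 y x) ->
  let f := fun a b => if a == p then h b else if b == p then h a else f2 a b in
  [/\ forall x y, F x y -> f x y = f y x,
      wdeg F f p = \sum_(b | F p b) h b &
      forall v, v != p -> wdeg F f v = (if F v p then h v else 0) + wdeg (remp F p) f2 v].
Proof.
move=> Fs Fi Hf2 f; split.
- move=> x y Fxy; rewrite /f.
  case: (eqVneq x p) => [xp|xp]; case: (eqVneq y p) => [yp|yp] //.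
    by move: Fxy; rewrite xp yp Fi.
  by apply: Hf2; rewrite /= Fxy xp yp.
- by apply: eq_bigr => b _; rewrite /f eqxx.
- move=> v vp; rewrite /wdeg.
  have E : forall b, F v b && (b != p) -> f v b = f2 v b.
    by move=> b /andP [_ bp]; rewrite /f (negbTE vp) (negbTE bp).
  case: ifP => Fvp.
    rewrite (bigD1 p) //=; congr (_ + _); first by rewrite /f eqxx (negbTE vp).
    rewrite (eq_bigr (f2 v)); last exact: E.
    by apply: eq_bigl => b; rewrite vp andbT.
  rewrite add0r (eq_bigr (f2 v)); last first.
    move=> b Fvb; apply: E; rewrite Fvb /=; apply/negP => /eqP bp; by rewrite -bp Fvb in Fvp.
  apply: eq_bigl => b; rewrite /= vp andbT; case Fvb: (F v b) => //.
  by apply/esym/negP => /eqP bp; rewrite -bp Fvb in Fvp.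
Qed.

Lemma finish (F : rel T) p (g g2 h : T -> Gm) (f2 : T -> T -> Gm) (L : {set T}) :
  symmetric F -> irreflexive F ->
  proper_lab (remp F p) g2 f2 ->
  (forall w, w \in L -> F p w /\ forall z, F w z -> z = p) ->
  (forall v, v != p -> v \notin L -> g v + (if F v p then h v else 0) = g2 v) ->
  (forall b, F p b -> h b != 0) ->
  (forall w, w \in L -> g p + \sum_(b | F p b) h b != g w + h w) ->
  (forall v, F p v -> v \notin L -> g p + \sum_(b | F p b) h b != g2 v + wdeg (remp F p) f2 v) ->
  exists f, proper_lab F g f.
Proof.
move=> Fs Fi [Hs2 Hn2 Hp2] HL Hg Hh HwL HwN.
have [Hs Wp Wv] := assemble h Fs Fi Hs2.
set f := fun a b => _ in Hs Wp Wv.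
have WL : forall w, w \in L -> g w + wdeg F f w = g w + h w.
  move=> w wL; have [Fpw Hlf] := HL w wL.
  have wp : w != p by apply/negP => /eqP E; by rewrite E Fi in Fpw.
  rewrite Wv // Fs Fpw wdeg0 ?addr0 //.
  by move=> b; apply/negP => /andP [/andP [/Hlf -> _]]; rewrite eqxx.
have WN : forall v, v != p -> v \notin L -> g v + wdeg F f v = g2 v + wdeg (remp F p) f2 v.
  by move=> v vp vL; rewrite Wv // addrA Hg.
have Hpv : forall v, F p v -> g p + wdeg F f p != g v + wdeg F f v.
  move=> v Fpv; rewrite Wp.
  have vp : v != p by apply/negP => /eqP E; by rewrite E Fi in Fpv.
  case: (boolP (v \in L)) => vL; first by rewrite WL //; apply: HwL.
  by rewrite WN //; apply: HwN.
exists f; split => //.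
- move=> x y Fxy; rewrite /f.
  case: (eqVneq x p) => [xp|xp].
    subst x; exact: Hh.
  case: (eqVneq y p) => [yp|yp].
    subst y; apply: Hh; by rewrite Fs.
  apply: Hn2; by rewrite /= Fxy xp yp.
- move=> u v Fuv.
  case: (eqVneq u p) => [up|up]; first by rewrite up; apply: Hpv; rewrite -up.
  case: (eqVneq v p) => [vp|vp]; first by rewrite vp eq_sym; apply: Hpv; rewrite Fs -vp.
  case: (boolP (u \in L)) => uL.
    by have [_ /(_ v Fuv) E] := HL u uL; rewrite E eqxx in vp.
  case: (boolP (v \in L)) => vL.
    by have [_ /(_ u (eqbLR (Fs u v) Fuv)) E] := HL v vL; rewrite E eqxx in up.
  rewrite !WN //; apply: Hp2; by rewrite /= Fuv up vp.
Qed.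

End ForestLab.
Section ForestLab2.
Local Open Scope ring_scope.
Variable Gm : finZmodType.
Variable T : finType.
Hypothesis Hn : (3 < #|Gm|)%N.

Lemma nopath_lab (F : rel T) (g : T -> Gm) : symmetric F -> irreflexive F ->
  ~~ [exists x, exists y, exists z, F x y && F y z && (x != z)] ->
  (forall u v, isolated_edge F u v -> g u != g v) -> exists f, proper_lab F g f.
Proof.
move=> Fs Fi Hnp Hiso.
have [c /and3P [c0 _ _]] := exists_avoid3 (0 : Gm) 0 0 Hn.
have Hnb : forall u v w, F u v -> F u w -> w = v.
  move=> u v w Fuv Fuw; apply/eqP; apply: contraNT Hnp => wv.
  apply/existsP; exists v; apply/existsP; exists u; apply/existsP; exists w.
  by rewrite Fs Fuv Fuw eq_sym wv.
exists (fun _ _ => c); split => // u v Fuv.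
have W : forall x y, F x y -> wdeg F (fun _ _ => c) x = c.
  move=> x y Fxy; rewrite /wdeg (big_pred1 y) // => b /=.
  apply/idP/idP => [Fxb|/eqP ->//]; by rewrite (Hnb _ _ _ Fxy Fxb).
rewrite (W _ _ Fuv) (W v u); last by rewrite Fs.
apply: contra (Hiso u v _) => [/eqP /addIr -> //|].
split=> //; split => w; [exact: Hnb | apply: Hnb; by rewrite Fs].
Qed.

Lemma forest_lab n : forall (F : rel T) (g : T -> Gm),
  (#|[set x | [exists y, F x y]]| <= n)%N -> symmetric F -> irreflexive F -> forest F ->
  (forall u v, isolated_edge F u v -> g u != g v) -> exists f, proper_lab F g f.
Proof.
elim: n => [|n IH] F g Hc Fs Fi Ff Hiso.
  apply: nopath_lab => //; apply/negP => /existsP [x /existsP [y /existsP [z /andP [/andP [Fxy _] _]]]].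
  have : (0 < #|[set x | [exists y, F x y]]|)%N.
    by rewrite card_gt0; apply/set0Pn; exists x; rewrite inE; apply/existsP; exists y.
  by move: Hc; rewrite leqn0 => /eqP ->.
case: (boolP [exists x, exists y, exists z, F x y && F y z && (x != z)]); last first.
  by move=> H; apply: nopath_lab.
move=> /existsP [a1 /existsP [b1 /existsP [c1 /andP [/andP [Fab Fbc] ac]]]].
have [p [q [l0 [Fpq Fpl0 l0q Hlf]]]] := structure Fs Fi Ff (ex_intro _ a1 (ex_intro _ b1 (ex_intro _ c1 (conj Fab (conj Fbc ac))))).
pose F2 := remp F p.
have F2s : symmetric F2 := remp_sym p Fs.
have F2i : irreflexive F2 := remp_irr p Fi.
have F2f : forest F2 := remp_forest p Ff.
have Hc2 : (#|[set x | [exists y, F2 x y]]| <= n)%N.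
  have : ([set x | [exists y, F2 x y]] \proper [set x | [exists y, F x y]]).
    apply/properP; split.
      apply/subsetP => x; rewrite !inE => /existsP [y /andP [/andP [Fxy _] _]].
      by apply/existsP; exists y.
    exists p; first by rewrite inE; apply/existsP; exists q.
    by rewrite inE; apply/negP => /existsP [y /andP [/andP [_ /negP]]].
  move=> /proper_card; move: Hc; lia.
have qp : q != p by apply/negP => /eqP E; by rewrite E Fi in Fpq.
have pnb : forall v w, F v p -> F v w -> w != p -> v = q.
  move=> v w Fvp Fvw wp; apply/eqP; apply: contraNT wp => vq.
  by rewrite -(Hlf v _ vq w Fvw) // Fs.
case: (boolP [exists z, F q z && (z != p)]) => [/existsP [z /andP [Fqz zp]]|Hq].
-
  have [y /and3P [y0 y1 y2]] := exists_avoid3 0 (g l0 - g p) (g z - g q) Hn.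
  pose g2 := fun v => if v == q then g q + y else g v.
  have Hiso2 : forall u v, isolated_edge F2 u v -> g2 u != g2 v.
    have K : forall u v, u != q -> isolated_edge F2 u v -> g2 u != g2 v.
      move=> u v uq [F2uv [H1 H2]].
      move: (F2uv) => /andP [/andP [Fuv up] vp].
      case: (eqVneq v q) => [vq|vq].
        subst v; have E : z = u by apply: H2; rewrite /F2 /= Fqz qp zp.
        by rewrite /g2 eqxx (negbTE uq) -E eq_sym neq_add.
      rewrite /g2 (negbTE uq) (negbTE vq); apply: Hiso; split => //; split.
        move=> w Fuw; case: (eqVneq w p) => [wp|wp].
          by rewrite wp in Fuw; have := pnb u v (Fuw) Fuv vp; move/eqP: uq.
        by apply: H1; rewrite /= Fuw up wp.
      move=> w Fvw; case: (eqVneq w p) => [wp|wp].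
        by rewrite wp in Fvw; have := pnb v u (Fvw) (eqbLR (Fs u v) Fuv) up; move/eqP: vq.
      by apply: H2; rewrite /= Fvw vp wp.
    move=> u v Huv; case: (eqVneq u q) => [uq|uq]; last exact: K.
    rewrite eq_sym; apply: K; last exact: iso_sym.
    apply/negP => /eqP vq; have [F2uv _] := Huv; by move: F2uv; rewrite uq vq F2i.
  have [f2 Hf2] := IH F2 g2 Hc2 F2s F2i F2f Hiso2.
  pose L := [set w | F p w && (w != q)].
  have l0L : l0 \in L by rewrite inE Fpl0 l0q.
  have BN : g p + y != g l0 by rewrite neq_add.
  have [s1 [s2 [s12 [A1 A2]]]] := ach2 Hn l0L BN.
  pose P := g2 q + wdeg F2 f2 q.
  have [s [[x [Hx Hsx]] sP]] : exists s, ach L g (g p + y) s /\ s != P.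
    case: (eqVneq s1 P) => [E|E]; last by exists s1.
    by exists s2; split => //; rewrite -E eq_sym.
  pose h := fun w => if w == q then y else x w.
  have Hsum : g p + \sum_(b0 | F p b0) h b0 = s.
    rewrite (bigD1 q) //= {1}/h eqxx Hsx -addrA; congr (_ + (_ + _)).
    rewrite (eq_bigr x); last by move=> b0 /andP [_ /negbTE bq]; rewrite /h bq.
    by apply: eq_bigl => b0; rewrite inE.
  apply: (finish (h := h) (L := L) Fs Fi Hf2).
  + move=> w; rewrite inE => /andP [Fpw wq]; split => // z' Fwz'; exact: Hlf Fpw wq z' Fwz'.
  + move=> v vp vL; rewrite /g2; case: (eqVneq v q) => [->|vq].
      by rewrite Fs Fpq /h eqxx.
    case: ifP => Fvp; last by rewrite addr0.
    by move: vL; rewrite inE Fs Fvp vq.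
  + move=> b Fpb; rewrite /h; case: (eqVneq b q) => [//|bq].
    by have [] := Hx b; rewrite // inE Fpb bq.
  + move=> w wL; rewrite Hsum eq_sym /h.
    have := wL; rewrite inE => /andP [_ /negbTE ->]; by have [] := Hx w wL.
  + move=> v Fpv vL; rewrite Hsum.
    have -> : v = q by move: vL; rewrite inE Fpv /= negbK => /eqP.
    exact: sP.
-
  have Hql : forall z, F q z -> z = p.
    move=> z' Fqz'; apply/eqP; apply: contraNT Hq => H; apply/existsP; exists z'; by rewrite Fqz'.
  have nb : forall w, F p w -> forall z, F w z -> z = p.
    move=> w Fpw z' Fwz'; case: (eqVneq w q) => [wq|wq]; first by apply: Hql; rewrite -wq.
    exact: Hlf Fpw wq z' Fwz'.
  have Hiso2 : forall u v, isolated_edge F2 u v -> g u != g v.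
    move=> u v [F2uv [H1 H2]]; apply: Hiso.
    move: (F2uv) => /andP [/andP [Fuv up] vp].
    split => //; split.
      move=> w Fuw; case: (eqVneq w p) => [wp|wp].
        by rewrite wp Fs in Fuw; have := nb u Fuw v Fuv; move/eqP: vp.
      by apply: H1; rewrite /= Fuw up wp.
    move=> w Fvw; case: (eqVneq w p) => [wp|wp].
      by rewrite wp Fs in Fvw; have := nb v Fvw u (eqbLR (Fs u v) Fuv); move/eqP: up.
    by apply: H2; rewrite /= Fvw vp wp.
  have [f2 Hf2] := IH F2 g Hc2 F2s F2i F2f Hiso2.
  pose L := [set w | F p w].
  have qL : q \in L by rewrite inE.
  have l0L : l0 \in L by rewrite inE.
  have ql0 : q != l0 by rewrite eq_sym.
  have [x [Hx Hsx]] := achA g (g p) Hn qL l0L ql0.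
  apply: (finish (h := x) (L := L) Fs Fi Hf2).
  + by move=> w; rewrite inE => Fpw; split => //; apply: nb.
  + move=> v vp vL; case: ifP => Fvp; last by rewrite addr0.
    by move: vL; rewrite inE Fs Fvp.
  + by move=> b Fpb; have [] := Hx b; rewrite // inE.
  + move=> w wL; rewrite eq_sym.
    have -> : g p + \sum_(b | F p b) x b = g q.
      by rewrite Hsx; congr (_ + _); apply: eq_bigl => b; rewrite inE.
    by have [] := Hx w wL.
  + by move=> v Fpv; rewrite inE Fpv.
Qed.

End ForestLab2.
Section Offsets.
Local Open Scope ring_scope.
Variable Gm : finZmodType.
Variable T : finType.
Hypothesis Hn : (3 < #|Gm|)%N.

Lemma sum_ind (P : pred T) (w : T) (d : Gm) :
  \sum_(y | P y) (if y == w then d else 0) = if P w then d else 0.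
Proof.
case Pw: (P w).
  rewrite (bigD1 w) //= eqxx big1 ?addr0 // => y /andP [_ /negbTE ->] //.
rewrite big1 // => y Py; case: eqP => // E; by rewrite E Pw in Py.
Qed.

Lemma iso_uniq (F : rel T) u v v' : isolated_edge F u v -> isolated_edge F u v' -> v' = v.
Proof. by move=> [_ [H1 _]] [Fuv' _]; apply: H1. Qed.

Lemma iso_irr (F : rel T) u v : irreflexive F -> isolated_edge F u v -> u != v.
Proof. by move=> Fi [Fuv _]; apply/negP => /eqP E; by rewrite E Fi in Fuv. Qed.

Lemma offsets (F H : rel T) : symmetric F -> irreflexive F -> symmetric H -> irreflexive H ->
  (forall u v, isolated_edge F u v -> exists r w, (r = u \/ r = v) /\ H r w /\ w != u /\ w != v) ->
  exists c : T -> T -> Gm, (forall x y, c x y = c y x) /\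
     forall u v, isolated_edge F u v -> wdeg H c u != wdeg H c v.
Proof.
move=> Fs Fi Hs Hi Hex.
suff : forall n (S : {set T}), (#|S| <= n)%N -> exists c : T -> T -> Gm, (forall x y, c x y = c y x) /\
     forall u v, isolated_edge F u v -> u \in S -> wdeg H c u != wdeg H c v.
  move=> /(_ #|T| setT (max_card _)) [c [cs Hc]]; exists c; split => // u v Huv.
  by apply: Hc; rewrite ?inE.
elim=> [|n IH] S HS.
  exists (fun _ _ => 0); split => // u v _ uS.
  by move: HS; rewrite leqn0 cards_eq0 => /eqP SE; rewrite SE inE in uS.
case: (set_0Vmem S) => [->|[u0 u0S]].
  by exists (fun _ _ => 0); split => // u v _; rewrite inE.
have HS' : (#|S :\ u0| <= n)%N by move: HS; rewrite (cardsD1 u0) u0S; lia.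
have [c [cs Hc]] := IH (S :\ u0) HS'.
case: (classic (exists v0, isolated_edge F u0 v0)) => [[v0 Hu0]|Hno]; last first.
  exists c; split => // u v Huv uS; apply: Hc => //.
  rewrite !inE uS andbT; apply/negP => /eqP E; subst u; apply: Hno; by exists v.
have [r [w [ruv [Hrw [wu wv]]]]] := Hex _ _ Hu0.
pose o := if r == u0 then v0 else u0.
have Hro : isolated_edge F r o.
  rewrite /o; case: ruv => ->; first by rewrite eqxx.
  rewrite ifN; first exact: iso_sym.
  by rewrite eq_sym; apply: iso_irr Hu0.
have u0ro : (u0 == r) || (u0 == o).
  rewrite /o; case: ruv => ->; first by rewrite eqxx.
  by case: (eqVneq v0 u0) => [->|_]; rewrite eqxx ?orbT.
have rw : r != w by apply/negP => /eqP E; by rewrite E Hi in Hrw.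
have ow : o != w by rewrite /o eq_sym; case: ifP.
pose wd := wdeg H c.
have [b Hb] : exists b, forall w', isolated_edge F w w' -> b = wd w' - wd w.
  case: (classic (exists w', isolated_edge F w w')) => [[w' Hw']|Hno].
    by exists (wd w' - wd w) => w'' /(iso_uniq Hw') ->.
  by exists 0 => w' Hw'; exfalso; apply: Hno; exists w'.
have [d /and3P [d1 d2 _]] := exists_avoid3 (wd o - wd r) b b Hn.
pose c' := fun x y => c x y + (if ((x == r) && (y == w)) || ((x == w) && (y == r)) then d else 0).
have W' : forall x, wdeg H c' x = wd x + (if x == r then d else 0) + (if x == w then d else 0).
  move=> x; rewrite /wdeg big_split /= -/(wdeg H c x) -addrA; congr (_ + _).
  case: (eqVneq x r) => [->|xr].
    rewrite (negbTE rw) addr0 (eq_bigr (fun y => if y == w then d else 0)); last first.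
      by move=> y _; rewrite andTb andFb orbF.
    by rewrite sum_ind Hrw.
  case: (eqVneq x w) => [->|xw].
    rewrite add0r (eq_bigr (fun y => if y == r then d else 0)); last first.
      by move=> y _; rewrite andTb andFb orFb.
    by rewrite sum_ind Hs Hrw.
  rewrite addr0 big1 // => y _; by rewrite (negbTE xr) (negbTE xw).
have Wo : forall x, x != r -> x != w -> wdeg H c' x = wd x.
  by move=> x xr xw; rewrite W' (negbTE xr) (negbTE xw) !addr0.
have Wr : wdeg H c' r = wd r + d by rewrite W' eqxx (negbTE rw) addr0.
have Ww : wdeg H c' w = wd w + d by rewrite W' eqxx eq_sym (negbTE rw) addr0.
have or : o != r by rewrite eq_sym; apply: iso_irr Hro.
have Hor : isolated_edge F o r by apply: iso_sym.
have Awr : forall v, isolated_edge F w v -> wdeg H c' w != wdeg H c' v.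
  move=> v Hwv.
  have vr : v != r.
    apply/negP => /eqP E; subst v; have := iso_uniq Hro (iso_sym Fs Hwv).
    by move/eqP; rewrite eq_sym (negbTE ow).
  have vw : v != w by rewrite eq_sym; apply: iso_irr Hwv.
  by rewrite Ww Wo // neq_add -(Hb v Hwv).
have Aro : wdeg H c' r != wdeg H c' o by rewrite Wr Wo // neq_add.
exists c'; split.
  by move=> x y; rewrite /c' (cs x y); case: (x == r); case: (y == w); case: (x == w); case: (y == r).
move=> u v Huv uS.
case: (eqVneq u r) => [ur|ur].
  by subst u; rewrite (iso_uniq Hro Huv).
case: (eqVneq u o) => [uo|uo].
  by subst u; rewrite (iso_uniq Hor Huv) eq_sym.
case: (eqVneq u w) => [uw|uw].
  by subst u; apply: Awr.
case: (eqVneq v r) => [vr|vr].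
  by subst v; move: (iso_uniq Hro (iso_sym Fs Huv)) => /eqP; rewrite (negbTE uo).
case: (eqVneq v o) => [vo|vo].
  by subst v; move: (iso_uniq Hor (iso_sym Fs Huv)) => /eqP; rewrite (negbTE ur).
case: (eqVneq v w) => [vw|vw].
  subst v; rewrite eq_sym; apply: Awr; exact: iso_sym.
rewrite !Wo //; apply: Hc => //.
rewrite !inE uS andbT; apply/negP => /eqP E; rewrite -E in u0ro.
by move: u0ro; rewrite (negbTE ur) (negbTE uo).
Qed.

End Offsets.
From Stdlib Require Import IndefiniteDescription FunctionalExtensionality.

Lemma exists_min (P : nat -> Prop) n : P n -> exists m, P m /\ forall k, P k -> (m <= k)%N.
Proof.
elim: n {-2}n (leqnn n) => [|N IH] n Hn Pn.
  exists n; split => // k _; by move: Hn; rewrite leqn0 => /eqP ->.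
case: (classic (exists k, P k /\ (k < n)%N)) => [[k [Pk kn]]|Hno].
  by apply: (IH k) => //; lia.
exists n; split => // k Pk; case: (leqP n k) => // kn; exfalso; apply: Hno; by exists k.
Qed.

Section Coord.
Local Open Scope ring_scope.
Variable Gm : finZmodType.
Variable T : finType.

Lemma coord (I : eqType) (e : rel T) (col : T -> T -> I) (i : I) :
  (3 < #|Gm|)%N -> simple_graph e -> no_isolated_edges e ->
  (forall x y, e x y -> col x y = col y x) ->
  forest [rel x y | e x y && (col x y == i)] ->
  exists phi : T -> T -> Gm, [/\ forall x y, e x y -> phi x y = phi y x,
     forall x y, e x y -> col x y = i -> phi x y != 0 &
     forall u v, e u v -> col u v = i -> wdeg e phi u != wdeg e phi v].
Proof.
move=> Hn [es ei] Hni cs Ff.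
pose F := [rel x y | e x y && (col x y == i)].
pose H := [rel x y | e x y && (col x y != i)].
have Fs : symmetric F.
  move=> x y; rewrite /= es; case Eyx: (e y x) => //=; by rewrite cs // es.
have Hs : symmetric H.
  move=> x y; rewrite /= es; case Eyx: (e y x) => //=; by rewrite cs // es.
have Fi : irreflexive F by move=> x; rewrite /= ei.
have Hi : irreflexive H by move=> x; rewrite /= ei.
have Hex : forall u v, isolated_edge F u v -> exists r w, (r = u \/ r = v) /\ H r w /\ w != u /\ w != v.
  move=> u v [Fuv [H1 H2]].
  have euv : e u v by move: Fuv => /andP [].
  case: (classic (exists w, e u w /\ w != v)) => [[w [euw wv]]|Hnu].
    exists u, w; split; first by left.
    have wu : w != u by apply/negP => /eqP E; by rewrite E ei in euw.
    split; last by split.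
    rewrite /= euw /=; apply/negP => ci; by move: wv; rewrite (H1 w) ?eqxx //= euw.
  case: (classic (exists w, e v w /\ w != u)) => [[w [evw wu]]|Hnv].
    exists v, w; split; first by right.
    have wv : w != v by apply/negP => /eqP E; by rewrite E ei in evw.
    split; last by split.
    rewrite /= evw /=; apply/negP => ci; by move: wu; rewrite (H2 w) ?eqxx //= evw.
  exfalso; apply: (Hni u v); split => //; split.
    move=> w euw; apply: NNPP => wv; apply: Hnu; exists w; split => //; exact/eqP.
  move=> w evw; apply: NNPP => wu; apply: Hnv; exists w; split => //; exact/eqP.
have [c [cs' Hc]] := offsets Hn Fs Fi Hs Hi Hex.
have [f [fs fn fp]] := @forest_lab Gm T Hn #|T| F (wdeg H c) (max_card _) Fs Fi Ff Hc.
exists (fun x y => if col x y == i then f x y else c x y).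
have Wsplit : forall v, wdeg e (fun x y => if col x y == i then f x y else c x y) v =
    wdeg F f v + wdeg H c v.
  move=> v; rewrite /wdeg (bigID (fun u => col v u == i)) /=; congr (_ + _).
    by apply: eq_bigr => u /andP [_ ->].
  by apply: eq_bigr => u /andP [_ /negbTE ->].
split.
- move=> x y exy; rewrite (cs x y exy).
  case: ifP => ci; last exact: cs'.
  apply: fs; by rewrite /= exy (cs x y exy) ci.
- move=> x y exy ci; rewrite ci eqxx; apply: fn; by rewrite /= exy ci eqxx.
- move=> u v euv ci; rewrite !Wsplit [wdeg F f u + _]addrC [wdeg F f v + _]addrC.
  apply: fp; by rewrite /= euv ci eqxx.
Qed.

End Coord.

Unset Implicit Arguments.

Theorem corollary6 (a : nat) (ka : nat) (T : finType) (e : rel T) :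
  (0 < a)%N -> is_k_of a ka ->
  simple_graph e -> arboricity_le e a -> no_isolated_edges e ->
  exists c, is_chi_sigma_star e c /\ (c <= ka)%N.
Proof.
move=> a0 [ka0 [Hsplit _]] Hsg [col [cs Hfor]] Hni.
have Hgood : group_sum_good e ka.
  move=> A HA.
  have [B [HB [phi [[psi phK Kph] Hadd]]]] := Hsplit A HA.
  have Hc : forall j, exists Phi : T -> T -> B j, [/\ forall x y, e x y -> Phi x y = Phi y x,
     forall x y, e x y -> col x y = j -> Phi x y != 0%R &
     forall u v, e u v -> col u v = j -> wdeg e Phi u != wdeg e Phi v].
    by move=> j; apply: coord => //; try exact: HB; try exact: Hfor.
  pose Phi := fun j => proj1_sig (constructive_indefinite_description _ (Hc j)).
  have HPhi : forall j, [/\ forall x y, e x y -> Phi j x y = Phi j y x,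
     forall x y, e x y -> col x y = j -> Phi j x y != 0%R &
     forall u v, e u v -> col u v = j -> wdeg e (Phi j) u != wdeg e (Phi j) v].
    by move=> j; rewrite /Phi; case: constructive_indefinite_description.
  have Hmorph : forall j x y, phi (x + y)%R j = (phi x j + phi y j)%R.
    by move=> j x y; rewrite Hadd.
  have Hphi0 : forall j, phi 0%R j = 0%R.
    move=> j; have := Hmorph j 0%R 0%R; rewrite GRing.addr0 => E.
    by apply: (@GRing.addrI _ (phi 0%R j)); rewrite GRing.addr0 -E.
  have Hsum : forall (P : pred T) (G : T -> A) j,
      phi (\sum_(u | P u) G u)%R j = (\sum_(u | P u) phi (G u) j)%R.
    move=> P G j; apply: (big_morph (fun x => phi x j) (Hmorph j) (Hphi0 j)).
  exists (fun x y => psi (fun j => Phi j x y)); split; [|split].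
  - move=> x y exy; congr psi.
    apply: functional_extensionality_dep => j; by have [H _ _] := HPhi j; apply: H.
  - move=> x y exy; apply/negP => /eqP E.
    have := congr1 (fun h => phi h (col x y)) E; rewrite Kph Hphi0 /=.
    by have [_ H _] := HPhi (col x y); move/eqP; rewrite (negbTE (H x y exy erefl)).
  - have Wj : forall w j, phi (wdeg e (fun x y => psi (fun j => Phi j x y)) w) j = wdeg e (Phi j) w.
      by move=> w j; rewrite /wdeg Hsum; apply: eq_bigr => b _; rewrite Kph.
    move=> u v euv; apply/negP => /eqP E.
    have := congr1 (fun h => phi h (col u v)) E; rewrite /= !Wj; apply/eqP.
    by have [_ _ H] := HPhi (col u v); apply: H.
have [c [[c0 Hc] Hmin]] := @exists_min (fun j => (0 < j)%N /\ group_sum_good e j) ka (conj ka0 Hgood).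
exists c; split; last exact: Hmin.
split => //; split => // j j0 Hj; exact: Hmin.
Qed.
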